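(* Let $x \in \mathbb{R}^n$ be the input data and let the coordinate index set $\{1,\dots,n\}$ be partitioned into $L$ nonempty levels; write $V_l \subseteq \mathbb{R}^n$ for the coordinate subspace of level $l$ ($l=1,\dots,L$, level $L$ coarsest, level $1$ finest), so that the $V_l$ are mutually orthogonal and $\mathbb{R}^n=\bigoplus_l V_l$. Let $\Pi_l$ be the orthogonal projection onto $V_l$, and for $v\in\mathbb{R}^n$ write $v_l=\Pi_l v$ and $v_{>l}=\sum_{m>l}\Pi_m v$ (so $v_{>L}=0$). For each $l$ let $P_l:\mathbb{R}^n\to V_l$ be a linear interpolation-prediction operator with $P_l v = P_l(v_{>l})$ for all $v$ (it uses only coordinates of coarser levels), and suppose $\|P_l\|_\infty\le p$ for all $l$, where $\|\cdot\|_\infty$ denotes the operator norm induced by the max-norm, and $p\ge 1$ ($p=1$ for linear interpolation, $p=1.25$ for cubic interpolation). Compression: for $l=L,L-1,\dots,1$, set $y_l = x_l - P_l\hat x_{>l}$, choose a quantized/dequantized value $\hat y_l\in V_l$ with $\|y_l-\hat y_l\|_\infty\le eb$ (where $eb>0$ is the compression error bound), and set $\hat x_l = P_l\hat x_{>l}+\hat y_l$. Progressive retrieval: for each level $l$ let $\tilde y_l\in V_l$ be the value reconstructed from only the loaded bitplanes, and define the information loss $\delta y_l=\hat y_l-\tilde y_l\in V_l$. Reconstruct, for $l=L,\dots,1$, $\tilde x_l = P_l\tilde x_{>l}+\tilde y_l$, and let $\tilde x=\sum_l \tilde x_l$. Then $$\|x-\tilde x\|_\infty \le \sum_{l=0}^{L-1}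 p^{\,l}\,\|\delta y_{l+1}\|_\infty + eb .$$
   Context: This models an interpolation-based progressive lossy compressor: data are split into hierarchical levels (by interpolation stride), each level is predicted by interpolation from already-reconstructed coarser levels, the prediction residual is quantized with pointwise error at most $eb$, and the quantized integers are stored by bitplanes so that a retrieval may load only some bitplanes of each level; $\delta y_l$ is the resulting loss at level $l$ relative to full retrieval. Linear interpolation predicts $y_i=\tfrac12(x_{i-1}+x_{i+1})$ (coefficients with absolute sum $1$), cubic interpolation predicts $y_i=-\tfrac1{16}x_{i-3}+\tfrac9{16}x_{i-1}+\tfrac9{16}x_{i+1}-\tfrac1{16}x_{i+3}$ (absolute sum $1.25$). $\|v\|_\infty$ for a vector is the maximum absolute entry. *)

(* Defs.v *)
(* Data live in column vectors 'cV[R]_n; coordinate i is v i 0.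
   Levels are indexed by 'I_L: index l : 'I_L is the paper's level l+1
   (index 0 = finest level 1, index L-1 = coarsest level L). *)
From mathcomp Require Import all_boot all_order all_algebra.
From mathcomp Require Import reals.
Set Implicit Arguments. Unset Strict Implicit. Unset Printing Implicit Defensive.
Import Order.TTheory GRing.Theory Num.Theory.
Local Open Scope ring_scope.

Section Defs.
Variables (R : realType) (n L : nat) (lev : 'I_n -> 'I_L).

Definition mnorm (v : 'cV[R]_n) : R := \big[Num.max/0]_(i < n) `|v i 0|.

Definition inV (l : 'I_L) (v : 'cV[R]_n) : Prop :=
  forall i : 'I_n, lev i != l -> v i 0 = 0.

Definition proj (l : 'I_L) (v : 'cV[R]_n) : 'cV[R]_n :=
  \col_i (if lev i == l then v i 0 else 0).

Definition coarser (l : 'I_L) (v : 'cV[R]_n) : 'cV[R]_n :=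
  \col_i (if (l < lev i)%N then v i 0 else 0).

End Defs.

(* Main.v *)
Require Import Defs.
From mathcomp Require Import zify ring.
From mathcomp Require Import all_boot all_order all_algebra.
From mathcomp Require Import reals.
Import Order.TTheory GRing.Theory Num.Theory.
Local Open Scope ring_scope.

Lemma mnorm_ge {R : realType} {n} (v : 'cV[R]_n) i : `|v i 0| <= mnorm v.
Proof.
rewrite /mnorm (bigD1 i) //= le_max lexx //.
Qed.

Lemma mnorm_le {R : realType} {n} (v : 'cV[R]_n) c :
  0 <= c -> (forall i, `|v i 0| <= c) -> mnorm v <= c.
Proof.
move=> c0 H; rewrite /mnorm; elim/big_ind: _ => //.
by move=> a b ha hb; rewrite ge_max ha hb.
Qed.

Theorem theorem5p1 (R : realType) (n L : nat) (lev : 'I_n -> 'I_L)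
  (lev_surj : forall l : 'I_L, exists i : 'I_n, lev i = l)
  (P : 'I_L -> 'M[R]_n) (p eb : R)
  (hp : 1 <= p) (heb : 0 < eb)
  (P_range : forall (l : 'I_L) (v : 'cV[R]_n), inV lev l (P l *m v))
  (P_coarse : forall (l : 'I_L) (v : 'cV[R]_n),
      P l *m v = P l *m coarser lev l v)
  (P_norm : forall (l : 'I_L) (v : 'cV[R]_n),
      mnorm (P l *m v) <= p * mnorm v)
  (x xhat xtil : 'cV[R]_n) (yhat ytil : 'I_L -> 'cV[R]_n)
  (yhat_in : forall l, inV lev l (yhat l))
  (ytil_in : forall l, inV lev l (ytil l))
  (* compression: xhat_l = P_l xhat_{>l} + yhat_l,
     with y_l = x_l - P_l xhat_{>l} and |y_l - yhat_l|_oo <= eb *)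
  (xhat_def : forall l, proj lev l xhat = P l *m coarser lev l xhat + yhat l)
  (quant : forall l,
      mnorm ((proj lev l x - P l *m coarser lev l xhat) - yhat l) <= eb)
  (* progressive retrieval: xtil_l = P_l xtil_{>l} + ytil_l *)
  (xtil_def : forall l, proj lev l xtil = P l *m coarser lev l xtil + ytil l) :
  mnorm (x - xtil) <= \sum_(l < L) p ^+ l * mnorm (yhat l - ytil l) + eb.
Proof.
set d : nat -> R := fun m => if @insub _ (fun k => (k < L)%N) 'I_L m is Some l then mnorm (yhat l - ytil l) else 0.
set B : nat -> R := fun k => \sum_(k <= m < L) p ^+ (m - k) * d m.

have dge m : 0 <= d m.
  rewrite /d; case: insub => [l|] //; rewrite /mnorm; elim/big_ind: _ => //= a b ha hb; rewrite le_max ha //.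
have p0 : 0 <= p by apply: le_trans hp.
have B0 k : 0 <= B k.
  by rewrite /B; apply: sumr_ge0 => m _; apply: mulr_ge0; [apply: exprn_ge0|].
have Brec k : (k < L)%N -> B k = d k + p * B k.+1.
  move=> kL; rewrite /B big_ltn // subnn expr0 mul1r; congr (_ + _).
  rewrite mulr_sumr big_nat_cond [RHS]big_nat_cond; apply: eq_bigr => m /andP[/andP[km _] _].
  by rewrite mulrA -exprS subnSK.
have Bmon1 k : B k.+1 <= B k.
  case: (ltnP k L) => kL.
    rewrite (Brec k kL) -{1}(add0r (B k.+1)); apply: lerD => //.
    by rewrite -{1}(mul1r (B k.+1)); apply: ler_wpM2r.
  by rewrite /B !big_geq //; apply: leq_trans kL _.
have Bmon a b : (b <= a)%N -> B a <= B b.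
  elim: a => [|a IH] ba; first by rewrite leqn0 in ba; rewrite (eqP ba).
  case: (ltnP a b) => ab.
    by have -> : b = a.+1 by apply/eqP; rewrite eqn_leq ba ab.
  exact: le_trans (Bmon1 a) (IH ab).
set e := xhat - xtil.
have coarserB m : coarser lev m xhat - coarser lev m xtil = coarser lev m e.
  apply/matrixP => i j; rewrite !mxE; case: ifP => _ //; by rewrite subr0.
have step i : (forall j, (lev i < lev j)%N -> `|e j 0| <= B (lev j)) ->
    `|e i 0| <= B (lev i).
  move=> IH.
  have hx := congr1 (fun M : 'cV[R]_n => M i 0) (xhat_def (lev i)).
  have ht := congr1 (fun M : 'cV[R]_n => M i 0) (xtil_def (lev i)).
  rewrite /= !mxE eqxx in hx ht.
  have -> : e i 0 = (P (lev i) *m coarser lev (lev i) e) i 0 + (yhat (lev i) - ytil (lev i)) i 0.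
    rewrite -coarserB mulmxBr !mxE hx ht.
    by rewrite opprD !addrA; congr (_ + _); rewrite -!addrA; congr (_ + _); rewrite addrC.
  rewrite (Brec _ (ltn_ord _)) [d _ + _]addrC; apply: le_trans (ler_normD _ _) _.
  apply: lerD.
    apply: le_trans (mnorm_ge _ _) _; apply: le_trans (P_norm _ _) _.
    apply: ler_wpM2l => //; apply: mnorm_le => // j; rewrite mxE.
    case: ifP => hj; last by rewrite normr0.
    by apply: le_trans (IH j hj) _; apply: Bmon.
  by apply: le_trans (mnorm_ge _ i) _; rewrite /d valK.
have ebound : forall k i, (L - lev i <= k)%N -> `|e i 0| <= B (lev i).
  elim => [|k IH] i hk.
    by move: (ltn_ord (lev i)); rewrite -subn_gt0; rewrite leqn0 in hk; rewrite (eqP hk).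
  apply: step => j hj; apply: IH.
  have := ltn_ord (lev j); lia.
have hB0 : B 0%N = \sum_(l < L) p ^+ l * mnorm (yhat l - ytil l).
  rewrite /B big_mkord; apply: eq_bigr => l _; by rewrite subn0 /d valK.
rewrite -hB0; apply: mnorm_le; first by apply: addr_ge0 => //; apply: ltW.
move=> i.
have -> : (x - xtil) i 0 = e i 0 + (proj lev (lev i) x - P (lev i) *m coarser lev (lev i) xhat - yhat (lev i)) i 0.
  have hx := congr1 (fun M : 'cV[R]_n => M i 0) (xhat_def (lev i)).
  move: hx; rewrite /= !mxE eqxx => hx.
  by rewrite hx; ring.
apply: le_trans (ler_normD _ _) _; apply: lerD.
  by apply: le_trans (ebound (L - lev i)%N i (leqnn _)) _; apply: Bmon.
exact: le_trans (mnorm_ge _ i) (quant _).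
Qed.
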